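(* Let $M$ be a homogeneous monoid that is automatic (respectively, biautomatic). Then for every finite alphabet $C$ representing a generating set of $M$, there is a language $K\subseteq C^*$ such that $(C,K)$ is an automatic (respectively, biautomatic) structure for $M$.
   Context: A monoid is homogeneous if it admits a finite presentation $\langle A\mid\mathcal{R}\rangle$ with $|u|=|v|$ for all $(u,v)\in\mathcal{R}$. For an alphabet $A$ and new symbol $\$$, $\delta_R$ maps a pair $(u,v)$ of words to the word over $(A\cup\{\$\})^2$ obtained by padding the shorter word at its end with $\$$'s; $\delta_L$ pads at the beginning. For a monoid $M$ generated by a finite alphabet $A$ and a regular language $L\subseteq A^*$ mapping onto $M$, let $L_a=\{(u,v)\in L\times L: ua=_M v\}$ and ${}_aL=\{(u,v)\in L\times L: au=_M v\}$ for $a\in A\cup\{\varepsilon\}$. $(A,L)$ is an automatic structure if all $L_a\delta_R$ are regular, a biautomatic structure if all $L_a\delta_R,{}_aL\delta_R,L_a\delta_L,{}_aL\delta_L$ are regular. $M$ is automatic (biautomatic) if it has an automatic (biautomatic) structure for some finite generating alphabet. *)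

(* Defs.v *)
From mathcomp Require Import all_boot.
Set Implicit Arguments. Unset Strict Implicit. Unset Printing Implicit Defensive.

Definition monoid_laws (M : Type) (mul : M -> M -> M) (one : M) : Prop :=
  [/\ forall x y z, mul x (mul y z) = mul (mul x y) z,
      forall x, mul one x = x &
      forall x, mul x one = x].

Definition eval_word (M : Type) (mul : M -> M -> M) (one : M)
  (A : Type) (f : A -> M) (w : seq A) : M :=
  foldr (fun a m => mul (f a) m) one w.

Definition generates (M : Type) (mul : M -> M -> M) (one : M)
  (A : Type) (f : A -> M) : Prop :=
  forall m : M, exists w : seq A, eval_word mul one f w = m.

Definition rstep (A : eqType) (R : seq (seq A * seq A)) (u v : seq A) : Prop :=
  exists x y l r, (l, r) \in R /\ u = x ++ l ++ y /\ v = x ++ r ++ y.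

Inductive cong (A : eqType) (R : seq (seq A * seq A)) : seq A -> seq A -> Prop :=
  | cong_refl u : cong R u u
  | cong_step u v : rstep R u v -> cong R u v
  | cong_sym u v : cong R u v -> cong R v u
  | cong_trans u v w : cong R u v -> cong R v w -> cong R u w.

Definition presents (M : Type) (mul : M -> M -> M) (one : M)
  (A : finType) (f : A -> M) (R : seq (seq A * seq A)) : Prop :=
  generates mul one f /\
  forall u v : seq A, eval_word mul one f u = eval_word mul one f v <-> cong R u v.

Definition homogeneous (M : Type) (mul : M -> M -> M) (one : M) : Prop :=
  exists (A : finType) (f : A -> M) (R : seq (seq A * seq A)),
    presents mul one f R /\ forall p, p \in R -> size p.1 = size p.2.

Definition regular (S : finType) (L : seq S -> Prop) : Prop :=
  exists (Q : finType) (q0 : Q) (delta : Q -> S -> Q) (F : pred Q),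
    forall w : seq S, L w <-> F (foldl delta q0 w).

(* The padding symbol $ is None; letters of (A u {$})^2 are pairs of options. *)
Definition padR (A : Type) (u v : seq A) : seq (option A * option A) :=
  let n := maxn (size u) (size v) in
  zip (map Some u ++ nseq (n - size u) None) (map Some v ++ nseq (n - size v) None).

Definition padL (A : Type) (u v : seq A) : seq (option A * option A) :=
  let n := maxn (size u) (size v) in
  zip (nseq (n - size u) None ++ map Some u) (nseq (n - size v) None ++ map Some v).

(* The word of a in A u {epsilon}, epsilon being None. *)
Definition letter_word (A : Type) (a : option A) : seq A :=
  if a is Some x then [:: x] else [::].

Definition padded_lang (A : Type)
  (pad : seq A -> seq A -> seq (option A * option A))
  (L : seq A -> Prop) (rel : seq A -> seq A -> Prop)
  : seq (option A * option A) -> Prop :=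
  fun w => exists u v, [/\ L u, L v, rel u v & w = pad u v].

Definition right_rel (M : Type) (mul : M -> M -> M) (one : M)
  (A : Type) (f : A -> M) (a : option A) (u v : seq A) : Prop :=
  eval_word mul one f (u ++ letter_word a) = eval_word mul one f v.

Definition left_rel (M : Type) (mul : M -> M -> M) (one : M)
  (A : Type) (f : A -> M) (a : option A) (u v : seq A) : Prop :=
  eval_word mul one f (letter_word a ++ u) = eval_word mul one f v.

Definition regular_onto (M : Type) (mul : M -> M -> M) (one : M)
  (A : finType) (f : A -> M) (L : seq A -> Prop) : Prop :=
  regular L /\ forall m : M, exists w, L w /\ eval_word mul one f w = m.

Definition automatic_structure (M : Type) (mul : M -> M -> M) (one : M)
  (A : finType) (f : A -> M) (L : seq A -> Prop) : Prop :=
  regular_onto mul one f L /\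
  forall a : option A, regular (padded_lang (@padR A) L (right_rel mul one f a)).

Definition biautomatic_structure (M : Type) (mul : M -> M -> M) (one : M)
  (A : finType) (f : A -> M) (L : seq A -> Prop) : Prop :=
  regular_onto mul one f L /\
  forall a : option A,
    [/\ regular (padded_lang (@padR A) L (right_rel mul one f a)),
        regular (padded_lang (@padR A) L (left_rel mul one f a)),
        regular (padded_lang (@padL A) L (right_rel mul one f a)) &
        regular (padded_lang (@padL A) L (left_rel mul one f a))].

Definition automatic (M : Type) (mul : M -> M -> M) (one : M) : Prop :=
  exists (A : finType) (f : A -> M) (L : seq A -> Prop),
    generates mul one f /\ automatic_structure mul one f L.

Definition biautomatic (M : Type) (mul : M -> M -> M) (one : M) : Prop :=
  exists (A : finType) (f : A -> M) (L : seq A -> Prop),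
    generates mul one f /\ biautomatic_structure mul one f L.

(* Main.v *)
Require Import Defs.
From mathcomp Require Import all_boot.
From Stdlib Require Import Setoid IndefiniteDescription.
From mathcomp Require Import zify.
Set Implicit Arguments. Unset Strict Implicit. Unset Printing Implicit Defensive.

Lemma regular_ext (S : finType) (L1 L2 : seq S -> Prop) :
  (forall w, L1 w <-> L2 w) -> regular L1 -> regular L2.
Proof.
move=> H [Q [q0 [d [F HF]]]]; exists Q, q0, d, F => w; rewrite -HF; exact: iff_sym (H w).
Qed.

Lemma regular_preim (S T : finType) (h : T -> S) (L : seq S -> Prop) :
  regular L -> regular (fun w => L (map h w)).
Proof.
move=> [Q [q0 [d [F HF]]]]; exists Q, q0, (fun q a => d q (h a)), F => w.
rewrite HF; suff -> : forall q, foldl d q (map h w) = foldl (fun q a => d q (h a)) q w by [].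
by elim: w => //= a w IH q; rewrite IH.
Qed.

Section NFA.
Variables (S Q : finType) (init : pred Q) (eps : rel Q)
  (step : Q -> S -> Q -> bool) (fin : pred Q).

Inductive acc : Q -> seq S -> Prop :=
| acc_fin q : fin q -> acc q [::]
| acc_eps q q' s : eps q q' -> acc q' s -> acc q s
| acc_step q a q' s : step q a q' -> acc q' s -> acc q (a :: s).

Lemma acc_connect q p s : connect eps q p -> acc p s -> acc q s.
Proof.
move=> /connectP [pth Hp ->]; elim: pth q Hp => //= r pth IH q /andP [Hqr Hp] Ha.
exact: acc_eps Hqr (IH r Hp Ha).
Qed.

Lemma acc_inv q s : acc q s ->
  exists2 p, connect eps q p &
    ((s = [::] /\ fin p) \/ exists a s' q', [/\ s = a :: s', step p a q' & acc q' s']).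
Proof.
elim=> {q s} [q Hf|q q' s He _ [p Hc H]|q a q' s Hs Ha _].
- by exists q => //; left.
- by exists p => //; apply: connect_trans (connect1 He) Hc.
- by exists q => //; right; exists a, s, q'.
Qed.

Definition clos (X : {set Q}) : {set Q} := [set q | [exists p in X, connect eps p q]].
Definition ndelta (X : {set Q}) (a : S) : {set Q} :=
  clos [set q' | [exists p in X, step p a q']].
Definition nfin (X : {set Q}) : bool := [exists q in X, fin q].

Lemma nfa_key s (X : {set Q}) :
  nfin (foldl ndelta (clos X) s) <-> exists2 q, q \in X & acc q s.
Proof.
elim: s X => [|a s IH] X /=.
  split.
    move=> /existsP [q /andP [] ]; rewrite inE => /existsP [p /andP [pX Hc] Hf].
    by exists p => //; apply: acc_connect Hc (acc_fin Hf).
  move=> [q qX /acc_inv [p Hc [[_ Hf]|[a [s' [q' [//]]]]]]].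
  by apply/existsP; exists p; rewrite Hf andbT inE; apply/existsP; exists q; rewrite qX.
rewrite /ndelta IH; split.
  move=> [q']; rewrite inE => /existsP [p /andP []]; rewrite inE.
  move=> /existsP [q /andP [qX Hc]] Hs Ha.
  by exists q => //; apply: acc_connect Hc (acc_step Hs Ha).
move=> [q qX /acc_inv [p Hc [[//]|[b [s' [q' [[-> ->] Hs Ha]]]]]]].
exists q' => //; rewrite inE; apply/existsP; exists p; rewrite Hs andbT inE.
by apply/existsP; exists q; rewrite qX.
Qed.

Lemma nfa_regular : regular (fun s => exists2 q, init q & acc q s).
Proof.
exists {set Q}%type, (clos [set q | init q]), ndelta, nfin => w.
by rewrite nfa_key; split => -[q]; rewrite ?inE => *; exists q; rewrite ?inE.
Qed.

End NFA.

Lemma regular_rev (S : finType) (L : seq S -> Prop) :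
  regular L -> regular (fun w => L (rev w)).
Proof.
move=> [Q [q0 [d [F HF]]]].
pose step q (a : S) q' := d q' a == q.
have H1 : forall s q, acc (fun _ _ => false) step (pred1 q0) q s <-> foldl d q0 (rev s) = q.
  elim=> [|a s IH] q; split.
  - by move=> /acc_inv [p /connectP [[|//] _ ->]] [[_ /eqP]|[? [? [? []]]]].
  - by move=> Hq; rewrite -Hq; constructor => /=.
  - move=> /acc_inv [p /connectP [[|//] _ ->]] [[//]|[b [s' [q' [[<- <-] /eqP Hs Ha]]]]]; move: (IH q') => [H _]; move: (H Ha).
    by rewrite rev_cons -cats1 foldl_cat /= => ->.
  - rewrite rev_cons -cats1 foldl_cat /= => Hq; apply: (@acc_step _ _ _ _ _ _ _ (foldl d q0 (rev s))).
      by rewrite /step Hq.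
    exact/IH.
apply: regular_ext (nfa_regular F (fun _ _ => false) step (pred1 q0)) => w.
split; first by move=> [q Fq /H1 Hq]; rewrite HF Hq.
by move=> Hw; exists (foldl d q0 (rev w)); [rewrite -HF | apply/H1].
Qed.

Section Pad.
Variable A : Type.
Implicit Types u v : seq A.

Lemma padR_cc a b u v : padR (a::u) (b::v) = (Some a, Some b) :: padR u v.
Proof. by rewrite /padR /= maxnSS !subSS. Qed.
Lemma padR_cn a u : padR (a::u) [::] = (Some a, None) :: padR u [::].
Proof. by rewrite /padR /= !maxn0 !subnn !subn0. Qed.
Lemma padR_nc b v : padR [::] (b::v) = (None, Some b) :: padR [::] v.
Proof. by rewrite /padR /= !max0n !subnn !subn0. Qed.
Lemma padR_nn : padR [::] [::] = [::] :> seq (option A * option A).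
Proof. by []. Qed.

Lemma padR_unfold u v : padR u v =
  if nilp u && nilp v then [::] else (ohead u, ohead v) :: padR (behead u) (behead v).
Proof. by case: u => [|a u]; case: v => [|b v]; rewrite ?padR_cc ?padR_cn ?padR_nc. Qed.

Definition ocons (x : option A) u := if x is Some a then a :: u else u.

Lemma ocons_ohead x u : (x = None -> u = [::]) -> ohead (ocons x u) = x /\ behead (ocons x u) = u.
Proof. by case: x => [a|] //= ->. Qed.

Lemma padR_ocons x y u v : (x = None -> u = [::]) -> (y = None -> v = [::]) ->
  ~ (x = None /\ y = None) -> padR (ocons x u) (ocons y v) = (x, y) :: padR u v.
Proof.
move=> Hx Hy Hn; rewrite padR_unfold.
have [E1 E2] := ocons_ohead Hx; have [E3 E4] := ocons_ohead Hy.
rewrite E1 E2 E3 E4; case: x Hx Hn {E1 E2} => [a|] Hx Hn //=.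
rewrite (Hx erefl) /=; by case: y Hy Hn {E3 E4} => [b|] Hy Hn //=; case: Hn.
Qed.

Lemma padR_fst u v : pmap fst (padR u v) = u.
Proof.
elim: u v => [|a u IH] v.
  by elim: v => [|b v IHv] //; rewrite padR_nc.
by case: v => [|b v]; rewrite ?padR_cc ?padR_cn /= IH.
Qed.

Lemma padR_snd u v : pmap snd (padR u v) = v.
Proof.
elim: v u => [|b v IH] u.
  by elim: u => [|a u IHu] //; rewrite padR_cn.
by case: u => [|a u]; rewrite ?padR_cc ?padR_nc /= IH.
Qed.

Lemma padR_inj u v u' v' : padR u v = padR u' v' -> u = u' /\ v = v'.
Proof.
move=> H; split; first by rewrite -(padR_fst u v) H padR_fst.
by rewrite -(padR_snd u v) H padR_snd.
Qed.

Lemma size_padR u v : size (padR u v) = maxn (size u) (size v).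
Proof. by rewrite /padR size_zip !size_cat !size_map !size_nseq !subnKC ?leq_maxl ?leq_maxr // minnn. Qed.

Lemma padL_rev u v : padL u v = rev (padR (rev u) (rev v)).
Proof.
rewrite /padL /padR !size_rev rev_zip; last first.
  by rewrite !size_cat !size_map !size_nseq !size_rev !subnKC ?leq_maxl ?leq_maxr.
by rewrite !rev_cat !rev_nseq !map_rev !revK.
Qed.

End Pad.

Definition PadR (A : Type) (P : seq A -> seq A -> Prop) : seq (option A * option A) -> Prop :=
  fun w => exists u v, P u v /\ w = padR u v.

Lemma PadR_padR (A : Type) (P : seq A -> seq A -> Prop) u v : PadR P (padR u v) <-> P u v.
Proof.
split; last by move=> H; exists u, v.
by move=> [u' [v' [H /padR_inj [-> ->]]]].
Qed.

Section Comp.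
Variables (A Q1 Q2 : finType).
Variables (q01 : Q1) (d1 : Q1 -> option A * option A -> Q1) (F1 : pred Q1).
Variables (q02 : Q2) (d2 : Q2 -> option A * option A -> Q2) (F2 : pred Q2).

Definition st1 q (x y : option A) := if (x == None) && (y == None) then q else d1 q (x, y).
Definition st2 q (x y : option A) := if (x == None) && (y == None) then q else d2 q (x, y).

Lemma foldl_padR1 q u w :
  foldl d1 q (padR u w) = foldl d1 (st1 q (ohead u) (ohead w)) (padR (behead u) (behead w)).
Proof. by rewrite padR_unfold /st1; case: u => [|a u]; case: w => [|b w]. Qed.
Lemma foldl_padR2 q u w :
  foldl d2 q (padR u w) = foldl d2 (st2 q (ohead u) (ohead w)) (padR (behead u) (behead w)).
Proof. by rewrite padR_unfold /st2; case: u => [|a u]; case: w => [|b w]. Qed.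

Definition cstate := (Q1 * Q2 * bool * bool * bool)%type.

Definition cstep (s : cstate) (x : option A * option A) (s' : cstate) : bool :=
  let: (q1, q2, fu, fw, fv) := s in
  [exists y : option A, [&& ~~ ((x.1 == None) && (x.2 == None)), fu ==> (x.1 == None),
     fv ==> (x.2 == None), fw ==> (y == None) &
     s' == (st1 q1 x.1 y, st2 q2 y x.2, fu || (x.1 == None), fw || (y == None), fv || (x.2 == None))]].

Definition ceps (s s' : cstate) : bool :=
  let: (q1, q2, fu, fw, fv) := s in
  [exists b : A, ~~ fw && (s' == (d1 q1 (None, Some b), d2 q2 (Some b, None), true, fw, true))].

Definition cfin (s : cstate) : bool := let: (q1, q2, _, _, _) := s in F1 q1 && F2 q2.

Lemma comp_correct (s : cstate) t :
  acc ceps cstep cfin s t <->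
  let: (q1, q2, fu, fw, fv) := s in
  exists u w v, [/\ t = padR u v, fu -> u = [::], fw -> w = [::], fv -> v = [::] &
                 F1 (foldl d1 q1 (padR u w)) && F2 (foldl d2 q2 (padR w v))].
Proof.
split.
  elim=> {s t} [[[[[q1 q2] fu] fw] fv] /= Hf|[[[[q1 q2] fu] fw] fv] s' t He _ IH|
                [[[[q1 q2] fu] fw] fv] [x1 x2] s' t Hs _ IH].
  - by exists [::], [::], [::].
  - move: He => /existsP [b /andP [Hfw /eqP Hs']]; subst s'.
    case: IH => u [w [v [-> Hu Hw Hv Hf]]].
    rewrite (Hu erefl) (Hv erefl) in Hf *.
    exists [::], (b :: w), [::]; split => //; first by move=> Hfw'; rewrite Hfw' in Hfw.
    by rewrite padR_nc padR_cn.
  - move: Hs => /existsP [y /and5P [Hn Hu0 Hv0 Hw0 /eqP Hs']]; subst s'.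
    case: IH => u [w [v [-> Hu Hw Hv Hf]]] /=.
    have Hux : x1 = None -> u = [::] by move=> E; apply: Hu; rewrite E eqxx orbT.
    have Hwy : y = None -> w = [::] by move=> E; apply: Hw; rewrite E eqxx orbT.
    have Hvx : x2 = None -> v = [::] by move=> E; apply: Hv; rewrite E eqxx orbT.
    exists (ocons x1 u), (ocons y w), (ocons x2 v); split.
    + rewrite padR_ocons //; move=> [E1 E2]; by rewrite E1 E2 in Hn.
    + by move=> Hfu; move: Hu0; rewrite Hfu /= => /eqP E; rewrite E /= Hux.
    + by move=> Hfw; move: Hw0; rewrite Hfw /= => /eqP E; rewrite E /= Hwy.
    + by move=> Hfv; move: Hv0; rewrite Hfv /= => /eqP E; rewrite E /= Hvx.
    + rewrite foldl_padR1 foldl_padR2.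
      by case: (ocons_ohead Hux) => -> ->; case: (ocons_ohead Hwy) => -> ->;
         case: (ocons_ohead Hvx) => -> ->.
case: s => [[[[q1 q2] fu] fw] fv] [u [w [v [-> Hu Hw Hv Hf]]]].
move: {2}(size u + size w + size v) (leqnn (size u + size w + size v)) => n.
elim: n u w v q1 q2 fu fw fv Hu Hw Hv Hf => [|n IH] u w v q1 q2 fu fw fv Hu Hw Hv Hf Hn.
  move: Hn Hf; rewrite leqn0 !addn_eq0 !size_eq0 => /andP [/andP [/eqP -> /eqP ->] /eqP ->] Hf.
  by apply: acc_fin.
have [/andP [/nilP Eu /nilP Ev]|Hne] := boolP (nilp u && nilp v).
  subst u v; case: w Hw Hf Hn => [|b w] Hw Hf Hn; first by apply: acc_fin.
  have Hfw : fw = false by case: fw Hw => // /(_ erefl).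
  apply: (acc_eps (q' := (d1 q1 (None, Some b), d2 q2 (Some b, None), true, fw, true))).
    by apply/existsP; exists b; rewrite Hfw eqxx.
  apply: (IH [::] w [::]) => //; first by rewrite Hfw.
  by move: Hf; rewrite padR_nc padR_cn.
rewrite padR_unfold (negbTE Hne).
apply: (acc_step (q' := (st1 q1 (ohead u) (ohead w), st2 q2 (ohead w) (ohead v),
   fu || (ohead u == None), fw || (ohead w == None), fv || (ohead v == None)))).
  apply/existsP; exists (ohead w); rewrite eqxx andbT /=.
  apply/and4P; split.
  - by move: Hne; case: (u) => [|a u']; case: (v) => [|b v'].
  - by apply/implyP => /Hu ->.
  - by apply/implyP => /Hv ->.
  - by apply/implyP => /Hw ->.
apply: (IH (behead u) (behead w) (behead v)).
- by case/orP => [/Hu -> //|]; case: (u) => [|a u'].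
- by case/orP => [/Hw -> //|]; case: (w) => [|a w'].
- by case/orP => [/Hv -> //|]; case: (v) => [|a v'].
- by move: Hf; rewrite foldl_padR1 foldl_padR2.
- rewrite -ltnS (leq_trans _ Hn) //.
  move: Hne; case: (u) => [|a u']; case: (v) => [|b v'] //= _; case: (w) => [|c w'] /=; lia.
Qed.

End Comp.

Lemma regular_comp (A : finType) (P1 P2 : seq A -> seq A -> Prop) :
  regular (PadR P1) -> regular (PadR P2) ->
  regular (PadR (fun u v => exists w, P1 u w /\ P2 w v)).
Proof.
move=> [Q1 [q01 [d1 [F1 H1]]]] [Q2 [q02 [d2 [F2 H2]]]].
apply: regular_ext (nfa_regular (pred1 (q01, q02, false, false, false))
   (ceps d1 d2) (cstep d1 d2) (cfin F1 F2)) => t.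
split.
  move=> [s /eqP -> /(comp_correct d1 F1 d2 F2) [u [w [v [-> _ _ _ /andP [Hf1 Hf2]]]]]].
  exists u, v; split => //; exists w; split.
    by apply/(PadR_padR P1); apply/H1.
  by apply/(PadR_padR P2); apply/H2.
move=> [u [v [[w [Hp1 Hp2]] ->]]].
exists (q01, q02, false, false, false); first exact: eqxx.
apply: (proj2 (comp_correct d1 F1 d2 F2 _ _)).
exists u, w, v; split => //; apply/andP; split.
  by apply/H1/PadR_padR.
by apply/H2/PadR_padR.
Qed.

Section Expand.
Variables (A B : finType) (E : A -> seq B).

Definition Ew (u : seq A) : seq B := flatten (map E u).
Definition oE (x : option A) : seq B := if x is Some a then E a else [::].
Definition w1 (p : seq (option A * option A)) := sumn (map (fun h => size (oE h.1)) p).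
Definition w2 (p : seq (option A * option A)) := sumn (map (fun h => size (oE h.2)) p).
Definition NE := \max_(a : A) size (E a).

Lemma Ew_cat u v : Ew (u ++ v) = Ew u ++ Ew v.
Proof. by rewrite /Ew map_cat flatten_cat. Qed.

Lemma Ew_ocons x u : Ew (ocons x u) = oE x ++ Ew u.
Proof. by case: x. Qed.

Lemma Ew_unfold u : Ew u = oE (ohead u) ++ Ew (behead u).
Proof. by case: u. Qed.

Lemma w1_cat p s : w1 (p ++ s) = w1 p + w1 s.
Proof. by rewrite /w1 map_cat sumn_cat. Qed.
Lemma w2_cat p s : w2 (p ++ s) = w2 p + w2 s.
Proof. by rewrite /w2 map_cat sumn_cat. Qed.

Lemma size_oE x : size (oE x) <= NE.
Proof. by case: x => [a|] //=; apply: (leq_bigmax a). Qed.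

Lemma w1_le p : w1 p <= NE * size p.
Proof. elim: p => [|h p IH] //=; rewrite mulnS leq_add ?size_oE //. Qed.
Lemma w2_le p : w2 p <= NE * size p.
Proof. elim: p => [|h p IH] //=; rewrite mulnS leq_add ?size_oE //. Qed.

Lemma w1_padR u v : w1 (padR u v) = size (Ew u).
Proof.
move: {2}(size u + size v) (leqnn (size u + size v)) => n.
elim: n u v => [|n IH] u v.
  by rewrite leqn0 addn_eq0 !size_eq0 => /andP [/eqP -> /eqP ->].
rewrite padR_unfold; case: ifP => [/andP [/nilP -> _] //|Hne Hn].
have -> : w1 ((ohead u, ohead v) :: padR (behead u) (behead v)) =
  size (oE (ohead u)) + w1 (padR (behead u) (behead v)) by [].
rewrite (Ew_unfold u) size_cat IH //.
move: Hne Hn; case: (u) => [|a u']; case: (v) => [|b v'] //= _; lia.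
Qed.

Lemma w2_padR u v : w2 (padR u v) = size (Ew v).
Proof.
move: {2}(size u + size v) (leqnn (size u + size v)) => n.
elim: n u v => [|n IH] u v.
  by rewrite leqn0 addn_eq0 !size_eq0 => /andP [/eqP -> /eqP ->].
rewrite padR_unfold; case: ifP => [/andP [_ /nilP ->] //|Hne Hn].
have -> : w2 ((ohead u, ohead v) :: padR (behead u) (behead v)) =
  size (oE (ohead v)) + w2 (padR (behead u) (behead v)) by [].
rewrite (Ew_unfold v) size_cat IH //.
move: Hne Hn; case: (u) => [|a u']; case: (v) => [|b v'] //= _; lia.
Qed.

Variables (P : seq A -> seq A -> Prop) (c : nat).
Hypothesis Hc : forall u v, P u v -> size (Ew v) = size (Ew u) + c.
Variables (Q : finType) (q0 : Q) (d : Q -> option A * option A -> Q) (F : pred Q).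
Hypothesis HF : forall w, PadR P w <-> F (foldl d q0 w).

Lemma acc_w w : F (foldl d q0 w) -> w2 w = w1 w + c.
Proof. by move=> /HF [u [v [Hp ->]]]; rewrite w1_padR w2_padR (Hc Hp). Qed.

Definition Dl := NE * #|Q|.

Lemma lag_bound n p s : size p <= n -> F (foldl d q0 (p ++ s)) ->
  w1 p <= w2 p + Dl /\ w2 p <= w1 p + Dl.
Proof.
elim: n p s => [|n IH] p s.
  by rewrite leqn0 size_eq0 => /eqP -> _; rewrite /Dl /w1 /w2 /=.
move=> Hn Hacc.
have [Hs|Hs] := leqP (size p) #|Q|.
  have H1 := w1_le p; have H2 := w2_le p.
  have : NE * size p <= Dl by rewrite /Dl leq_mul2l Hs orbT.
  lia.
pose f k := foldl d q0 (take k p).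
pose sq := map f (iota 0 #|Q|.+1).
have : ~~ uniq sq.
  apply/negP => Hu; have := uniq_leq_size Hu (fun x _ => mem_enum Q x).
  by rewrite /sq size_map size_iota -cardE ltnn.
case/(uniqPn q0) => i [j [Hij]]; rewrite /sq size_map size_iota => Hj.
rewrite !(nth_map 0) ?size_iota //; last by apply: ltn_trans Hj.
rewrite !nth_iota ?add0n //; last by apply: ltn_trans Hj.
rewrite /f => Heq.
have Hjp : j <= size p by rewrite -ltnS (leq_trans Hj) // ltnS ltnW.
pose x := take i p; pose y := drop i (take j p); pose t := drop j p.
have Hxy : take j p = x ++ y by rewrite /x /y -{1}(cat_take_drop i (take j p)) take_takel // ltnW.
have Hp : p = x ++ y ++ t by rewrite catA -Hxy cat_take_drop.
have Hacc2 : F (foldl d q0 (x ++ (t ++ s))).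
  have -> : foldl d q0 (x ++ t ++ s) = foldl d (foldl d q0 (take i p)) (t ++ s) by rewrite foldl_cat.
  rewrite Heq Hxy -foldl_cat catA -(catA x y t) -Hp; exact: Hacc.
have Hy : w1 y = w2 y.
  have E1 := acc_w Hacc; have E2 := acc_w Hacc2.
  rewrite Hp !w1_cat !w2_cat in E1 E2; lia.
have Hsz : size (x ++ t) <= n.
  have : size p = size x + size y + size t by rewrite Hp !size_cat addnA.
  have : size y = j - i.
    rewrite /y size_drop size_takel //.
  rewrite size_cat; lia.
have := IH (x ++ t) s Hsz; rewrite -catA => /(_ Hacc2).
rewrite Hp !w1_cat !w2_cat; lia.
Qed.


Definition Bd := Dl + NE.
Definition estate := (Q * Bd.-bseq B * Bd.-bseq B * bool * bool)%type.

Definition eeps (s s' : estate) : bool :=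
  let: (q, b1, b2, e1, e2) := s in let: (q', b1', b2', e1', e2') := s' in
  [exists h : option A * option A,
    [&& ~~ ((h.1 == None) && (h.2 == None)), e1 ==> (h.1 == None), e2 ==> (h.2 == None),
        q' == d q h &
        [&& (b1' : seq B) == b1 ++ oE h.1, (b2' : seq B) == b2 ++ oE h.2,
            e1' == e1 || (h.1 == None) & e2' == e2 || (h.2 == None)]]].

Definition rd (b : seq B) (e : bool) (x : option B) (b' : seq B) (e' : bool) :=
  if x is Some z then (b == z :: b') && (e' == e) else [&& b == [::], b' == [::] & e'].

Definition estep (s : estate) (x : option B * option B) (s' : estate) : bool :=
  let: (q, b1, b2, e1, e2) := s in let: (q', b1', b2', e1', e2') := s' in
  [&& ~~ ((x.1 == None) && (x.2 == None)), q' == q, rd b1 e1 x.1 b1' e1' & rd b2 e2 x.2 b2' e2'].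

Definition efin (s : estate) : bool :=
  let: (q, b1, b2, _, _) := s in [&& F q, (b1 : seq B) == [::] & (b2 : seq B) == [::]].

Lemma rdP b e x b' e' : rd b e x b' e' ->
  [/\ b = ocons x b', x = None -> b' = [::] & e' = e || (x == None)].
Proof.
case: x => [z|] /=; first by case/andP => /eqP -> /eqP ->; rewrite orbF.
by case/and3P => /eqP -> /eqP -> ->; rewrite orbT.
Qed.

Lemma ocons_cat (T : Type) (x : option T) (b w : seq T) : ocons x b ++ w = ocons x (b ++ w).
Proof. by case: x. Qed.

Lemma exp_sound s t : acc eeps estep efin s t ->
  let: (q, b1, b2, e1, e2) := s in
  exists u v, [/\ F (foldl d q (padR u v)), e1 -> u = [::], e2 -> v = [::] &
     t = padR ((b1 : seq B) ++ Ew u) ((b2 : seq B) ++ Ew v)].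
Proof.
elim=> {s t} [[[[[q b1] b2] e1] e2] /= /and3P [Hf /eqP -> /eqP ->]|
    [[[[q b1] b2] e1] e2] [[[[q' b1'] b2'] e1'] e2'] t He _ IH|
    [[[[q b1] b2] e1] e2] [x1 x2] [[[[q' b1'] b2'] e1'] e2'] t Hs _ IH].
- by exists [::], [::].
- move: He => /existsP [[x y] /and5P [/= Hn Hx Hy /eqP Hq /and4P [/eqP Hb1 /eqP Hb2 /eqP He1 /eqP He2]]].
  case: IH => u [v [Hf Hu Hv ->]].
  have Hux : x = None -> u = [::] by move=> Ex; apply: Hu; rewrite He1 Ex eqxx orbT.
  have Hvy : y = None -> v = [::] by move=> Ey; apply: Hv; rewrite He2 Ey eqxx orbT.
  exists (ocons x u), (ocons y v); split.
  + rewrite padR_ocons //=; first by rewrite -Hq.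
    by move=> [Ex Ey]; rewrite Ex Ey in Hn.
  + by move=> He; move: Hx; rewrite He /= => /eqP Ex; rewrite Ex /=; apply: Hux.
  + by move=> He; move: Hy; rewrite He /= => /eqP Ey; rewrite Ey /=; apply: Hvy.
  + by rewrite !Ew_ocons Hb1 Hb2 !catA.
- move: Hs => /and4P [/= Hn /eqP Hq /rdP [Hb1 Hx1 He1] /rdP [Hb2 Hx2 He2]].
  case: IH => u [v [Hf Hu Hv ->]].
  exists u, v; split.
  + by rewrite -Hq.
  + by move=> Ex; apply: Hu; rewrite He1 Ex.
  + by move=> Ex; apply: Hv; rewrite He2 Ex.
  + rewrite Hb1 Hb2 !ocons_cat padR_ocons //.
    * by move=> Ex; rewrite (Hx1 Ex) Hu // He1 Ex eqxx orbT.
    * by move=> Ex; rewrite (Hx2 Ex) Hv // He2 Ex eqxx orbT.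
    * by move=> [E1 E2]; rewrite E1 E2 in Hn.
Qed.

Definition LagInv (b1 b2 : seq B) u v := forall p s, padR u v = p ++ s ->
  size b1 + w1 p <= size b2 + w2 p + Dl /\ size b2 + w2 p <= size b1 + w1 p + Dl.

Lemma exp_complete n u v q (bs1 bs2 : Bd.-bseq B) (e1 e2 : bool) :
  (2 * NE + 1) * size (padR u v) + size bs1 + size bs2 <= n ->
  F (foldl d q (padR u v)) -> (e1 -> u = [::]) -> (e2 -> v = [::]) ->
  LagInv bs1 bs2 u v ->
  acc eeps estep efin (q, bs1, bs2, e1, e2) (padR ((bs1 : seq B) ++ Ew u) ((bs2 : seq B) ++ Ew v)).
Proof.
elim: n u v q bs1 bs2 e1 e2 => [|n IH] u v q bs1 bs2 e1 e2 Hn Hf Hu Hv HL.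
  have : size (padR u v) = 0 /\ size bs1 = 0 /\ size bs2 = 0 by lia.
  move=> [/size0nil Hp [/size0nil Hb1 /size0nil Hb2]].
  have [Eu Ev] : u = [::] /\ v = [::].
    by move: Hp; case: (u) => [|a u']; case: (v) => [|b v']; rewrite ?padR_cc ?padR_cn ?padR_nc.
  subst u v; rewrite Hb1 Hb2; apply: acc_fin; rewrite /= Hb1 Hb2 !eqxx !andbT.
  by move: Hf.
have guess : (nilp bs1 || nilp bs2) -> ~~ (nilp u && nilp v) ->
  acc eeps estep efin (q, bs1, bs2, e1, e2) (padR ((bs1 : seq B) ++ Ew u) ((bs2 : seq B) ++ Ew v)).
  move=> Hnil Hne.
  pose h := (ohead u, ohead v).
  have Hpu : padR u v = [:: h] ++ padR (behead u) (behead v) by rewrite padR_unfold (negbTE Hne).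
  have [L1 L2] := HL _ _ Hpu.
  have Hh1 := size_oE h.1; have Hh2 := size_oE h.2.
  have Hw1 : w1 [:: h] = size (oE h.1) by rewrite /w1 /= addn0.
  have Hw2 : w2 [:: h] = size (oE h.2) by rewrite /w2 /= addn0.
  have Hs : size bs1 = 0 \/ size bs2 = 0 by case/orP: Hnil => /nilP ->; [left|right].
  have HBd : Bd = Dl + NE by [].
  have Hb1 : size ((bs1 : seq B) ++ oE h.1) <= Bd by rewrite size_cat; lia.
  have Hb2 : size ((bs2 : seq B) ++ oE h.2) <= Bd by rewrite size_cat; lia.
  apply: (acc_eps (q' := (d q h, Bseq Hb1, Bseq Hb2, e1 || (h.1 == None), e2 || (h.2 == None)))).
    apply/existsP; exists h; rewrite !eqxx !andbT /=.
    apply/and3P; split.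
    - by move: Hne; case: (u) => [|a u']; case: (v) => [|b v'].
    - by apply/implyP => /Hu ->.
    - by apply/implyP => /Hv ->.
  have -> : (bs1 : seq B) ++ Ew u = ((bs1 : seq B) ++ oE h.1) ++ Ew (behead u) by rewrite -catA -Ew_unfold.
  have -> : (bs2 : seq B) ++ Ew v = ((bs2 : seq B) ++ oE h.2) ++ Ew (behead v) by rewrite -catA -Ew_unfold.
  have Hh1' : size (oE (ohead u)) <= NE := Hh1.
  have Hh2' : size (oE (ohead v)) <= NE := Hh2.
  apply: IH => /=.
  - move: Hn; rewrite Hpu /= !size_cat mulnS; lia.
  - by move: Hf; rewrite Hpu.
  - by case/orP => [/Hu -> //|]; case: (u) => [|a u'].
  - by case/orP => [/Hv -> //|]; case: (v) => [|a v'].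
  - move=> p s Hp; have [] := HL (h :: p) s; first by rewrite Hpu Hp.
    have -> : w1 (h :: p) = size (oE (ohead u)) + w1 p by [].
    have -> : w2 (h :: p) = size (oE (ohead v)) + w2 p by [].
    rewrite !size_cat; lia.
have [Eb1|[c1 [r1 Eb1]]] : (bs1 : seq B) = [::] \/ exists c r, (bs1 : seq B) = c :: r
  by case: (bs1 : seq B) => [|z r]; [left|right; exists z, r].
all: have [Eb2|[c2 [r2 Eb2]]] : (bs2 : seq B) = [::] \/ exists c r, (bs2 : seq B) = c :: r
  by case: (bs2 : seq B) => [|z r]; [left|right; exists z, r].
- have [/andP [/nilP Eu /nilP Ev]|Hne] := boolP (nilp u && nilp v).
    subst u v; rewrite Eb1 Eb2; apply: acc_fin; rewrite /= Eb1 Eb2 !eqxx !andbT.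
    by move: Hf.
  by apply: guess => //; rewrite Eb1.
- have [/andP [/nilP Eu /nilP Ev]|Hne] := boolP (nilp u && nilp v); last first.
    by apply: guess => //; rewrite Eb1.
  subst u v.
  have Hr : size r2 <= Bd by have := size_bseq bs2; rewrite Eb2 /= => /ltnW.
  rewrite Eb1 Eb2 /= padR_nc.
  apply: (acc_step (q' := (q, bs1, Bseq Hr, true, e2))).
    by rewrite /= Eb1 Eb2 !eqxx.
  have := IH [::] [::] q bs1 (Bseq Hr) true e2; rewrite Eb1 /=; apply => //.
  + move: Hn; rewrite Eb1 Eb2 /=; lia.
  + move=> p s; rewrite padR_nn => /esym /nilP; rewrite /nilp size_cat => /eqP Hps.
    have -> : p = [::] by apply/nilP; rewrite /nilp; lia.
    have [_] := HL [::] [::] erefl.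
    by rewrite Eb1 Eb2 /w1 /w2 /=; lia.
- have [/andP [/nilP Eu /nilP Ev]|Hne] := boolP (nilp u && nilp v); last first.
    by apply: guess => //; rewrite Eb2 orbT.
  subst u v.
  have Hr : size r1 <= Bd by have := size_bseq bs1; rewrite Eb1 /= => /ltnW.
  rewrite Eb1 Eb2 /= padR_cn.
  apply: (acc_step (q' := (q, Bseq Hr, bs2, e1, true))).
    by rewrite /= Eb1 Eb2 !eqxx.
  have := IH [::] [::] q (Bseq Hr) bs2 e1 true; rewrite Eb2 /=; apply => //.
  + move: Hn; rewrite Eb1 Eb2 /=; lia.
  + move=> p s; rewrite padR_nn => /esym /nilP; rewrite /nilp size_cat => /eqP Hps.
    have -> : p = [::] by apply/nilP; rewrite /nilp; lia.
    have [Hl _] := HL [::] [::] erefl.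
    by move: Hl; rewrite Eb1 Eb2 /w1 /w2 /=; lia.
- have Hr1 : size r1 <= Bd by have := size_bseq bs1; rewrite Eb1 /= => /ltnW.
  have Hr2 : size r2 <= Bd by have := size_bseq bs2; rewrite Eb2 /= => /ltnW.
  rewrite Eb1 Eb2 /= padR_cc.
  apply: (acc_step (q' := (q, Bseq Hr1, Bseq Hr2, e1, e2))).
    by rewrite /= Eb1 Eb2 !eqxx.
  apply: IH => //.
  + move: Hn; rewrite Eb1 Eb2 /=; lia.
  + move=> p s Hp; have [] := HL p s Hp; rewrite Eb1 Eb2 /=; lia.
Qed.

Lemma exp_lang t :
  (exists2 s, pred1 ((q0, Bseq (isT : size [::] <= Bd), Bseq (isT : size [::] <= Bd), false, false) : estate) s
      & acc eeps estep efin s t) <->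
  PadR (fun x y => exists u v, [/\ P u v, x = Ew u & y = Ew v]) t.
Proof.
split.
  move=> [s /eqP -> /exp_sound [u [v [Hf _ _ ->]]]].
  exists (Ew u), (Ew v); split => //; exists u, v; split => //.
  by move/HF: Hf => /PadR_padR.
move=> [x [y [[u [v [Hp -> ->]]] ->]]].
exists (q0, Bseq (isT : size [::] <= Bd), Bseq (isT : size [::] <= Bd), false, false); first exact: eqxx.
apply: (@exp_complete _ u v) => //=.
- have Hacc : F (foldl d q0 (padR u v)) by apply/HF/PadR_padR.
  exact: Hacc.
- move=> p s Hps.
  have Hacc : F (foldl d q0 (p ++ s)) by rewrite -Hps; apply/HF/PadR_padR.
  have := lag_bound (leqnn _) Hacc; rewrite /=; lia.
Qed.

End Expand.

Lemma regular_expand (A B : finType) (E : A -> seq B) (P : seq A -> seq A -> Prop) (c : nat) :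
  (forall u v, P u v -> size (Ew E v) = size (Ew E u) + c) ->
  regular (PadR P) ->
  regular (PadR (fun x y => exists u v, [/\ P u v, x = Ew E u & y = Ew E v])).
Proof.
move=> Hc [Q [q0 [d [F HF]]]].
exact: regular_ext (exp_lang Hc HF) (nfa_regular _ _ _ _).
Qed.

Section Homog.
Variables (M : Type) (mul : M -> M -> M) (one : M).
Hypothesis Hl : monoid_laws mul one.

Local Notation ev f := (eval_word mul one f).

Lemma eval_cat (X : Type) (f : X -> M) u v : ev f (u ++ v) = mul (ev f u) (ev f v).
Proof.
case: Hl => Ha H1 _.
elim: u => [|a u IH] /=; first by rewrite H1.
by rewrite IH Ha.
Qed.

Variables (A0 : finType) (f0 : A0 -> M) (R0 : seq (seq A0 * seq A0)).
Hypothesis Hp : presents mul one f0 R0.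
Hypothesis Hlen : forall p, p \in R0 -> size p.1 = size p.2.

Lemma cong_size u v : cong R0 u v -> size u = size v.
Proof.
elim=> {u v} [u|u v [x [y [l [r [HR [-> ->]]]]]]|u v _ IH|u v w _ IH1 _ IH2] //.
- by rewrite !size_cat (Hlen HR).
- by rewrite IH1 IH2.
Qed.

Lemma size_eq u v : ev f0 u = ev f0 v -> size u = size v.
Proof. by move=> /(proj2 Hp u v) /cong_size. Qed.

Definition lam (m : M) : nat := size (proj1_sig (constructive_indefinite_description _ (proj1 Hp m))).

Lemma lamE u : lam (ev f0 u) = size u.
Proof.
rewrite /lam; case: constructive_indefinite_description => w /= Hw.
exact: size_eq.
Qed.

Lemma lamM x y : lam (mul x y) = lam x + lam y.
Proof.
have [u <-] := proj1 Hp x; have [v <-] := proj1 Hp y.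
by rewrite -eval_cat !lamE size_cat.
Qed.

Lemma lam0 m : lam m = 0 -> m = one.
Proof.
have [u <-] := proj1 Hp m; rewrite lamE => /size0nil -> //.
Qed.

Lemma lam_one : lam one = 0.
Proof. exact: (lamE [::]). Qed.

Variables (C : finType) (g : C -> M).
Hypothesis Hg : generates mul one g.

Lemma atom_gen a0 : exists c, g c = f0 a0.
Proof.
have [w Hw] := Hg (f0 a0).
have H1 : lam (ev g w) = 1 by rewrite Hw; have := lamE [:: a0]; rewrite /=; case: Hl => _ _ ->.
case: Hl => _ _ Hr.
elim: w Hw H1 => [|c w IH] /= Hw H1; first by rewrite lam_one in H1.
rewrite lamM in H1.
have [Hc|Hc] : lam (g c) = 1 /\ lam (ev g w) = 0 \/ lam (g c) = 0 /\ lam (ev g w) = 1 by lia.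
  exists c; case: Hc => _ /lam0 Hw0; by rewrite -Hw Hw0 Hr.
case: Hc => /lam0 Hc0 Hw1; apply: IH => //.
by rewrite -Hw Hc0; case: Hl => _ ->.
Qed.

Lemma short_word m : exists x : seq C, ev g x = m /\ size x = lam m.
Proof.
have [u <-] := proj1 Hp m; rewrite lamE.
elim: u => [|a u [x [Hx Hs]]] /=; first by exists [::].
have [c Hc] := atom_gen a.
by exists (c :: x); rewrite /= Hc Hx Hs.
Qed.

End Homog.

Lemma PadR_ext (A : finType) (P P' : seq A -> seq A -> Prop) :
  (forall u v, P u v <-> P' u v) -> regular (PadR P) -> regular (PadR P').
Proof.
move=> H; apply: regular_ext => w; split => -[u [v [Hp ->]]]; exists u, v; split => //; exact/H.
Qed.

Lemma padded_PadR (A : Type) (L : seq A -> Prop) rel w :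
  padded_lang (@padR A) L rel w <-> PadR (fun u v => [/\ L u, L v & rel u v]) w.
Proof.
split; first by move=> [u [v [H1 H2 H3 ->]]]; exists u, v.
by move=> [u [v [[H1 H2 H3] ->]]]; exists u, v.
Qed.

Lemma padded_padL (A : Type) (L : seq A -> Prop) rel w :
  padded_lang (@padL A) L rel w <->
  PadR (fun u v => [/\ L (rev u), L (rev v) & rel (rev u) (rev v)]) (rev w).
Proof.
split.
  move=> [u [v [H1 H2 H3 ->]]]; exists (rev u), (rev v); rewrite !revK; split => //.
  by rewrite padL_rev revK.
move=> [u [v [[H1 H2 H3] Hw]]]; exists (rev u), (rev v); split => //.
by rewrite padL_rev !revK -Hw revK.
Qed.

Lemma regular_padL (A : finType) (L : seq A -> Prop) rel :
  regular (padded_lang (@padL A) L rel) <->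
  regular (PadR (fun u v => [/\ L (rev u), L (rev v) & rel (rev u) (rev v)])).
Proof.
split => H.
  apply: regular_ext (regular_rev H) => w; rewrite padded_padL revK; done.
apply: regular_ext (regular_rev H) => w; rewrite padded_padL; done.
Qed.

Lemma Ew_rev (A B : finType) (E : A -> seq B) u :
  Ew (fun a => rev (E a)) u = rev (Ew E (rev u)).
Proof.
elim: u => [|a u IH] //=.
by rewrite rev_cons -cats1 Ew_cat rev_cat -IH /Ew /= cats0.
Qed.

Section Transfer.
Variables (M : Type) (mul : M -> M -> M) (one : M).
Hypothesis Hl : monoid_laws mul one.
Variables (X : finType) (Lg : seq X -> Prop) (ev : seq X -> M) (act : M -> M -> M) (hl : X -> M).
Hypothesis onto : forall m, exists t, Lg t /\ ev t = m.
Hypothesis gen : generates mul one hl.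
Definition Rel m u v := [/\ Lg u, Lg v & act m (ev u) = ev v].
Hypothesis base1 : regular (PadR (Rel one)).
Hypothesis base : forall a, regular (PadR (Rel (hl a))).
Hypothesis law : (forall x y z, act (mul x y) z = act y (act x z)) \/
                 (forall x y z, act (mul x y) z = act x (act y z)).

Lemma rel_mul x y : regular (PadR (Rel x)) -> regular (PadR (Rel y)) -> regular (PadR (Rel (mul x y))).
Proof.
move=> Hx Hy; case: law => Hlaw.
  apply: PadR_ext (regular_comp Hx Hy) => u v; split.
    by move=> [w [[H1 H2 H3] [H4 H5 H6]]]; split => //; rewrite Hlaw H3.
  move=> [H1 H2 H3]; have [t [Ht Hte]] := onto (act x (ev u)).
  by exists t; split; split => //; rewrite Hte -Hlaw.
apply: PadR_ext (regular_comp Hy Hx) => u v; split.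
  by move=> [w [[H1 H2 H3] [H4 H5 H6]]]; split => //; rewrite Hlaw H3.
move=> [H1 H2 H3]; have [t [Ht Hte]] := onto (act y (ev u)).
by exists t; split; split => //; rewrite Hte -Hlaw.
Qed.

Lemma rel_all m : regular (PadR (Rel m)).
Proof.
have [w <-] := gen m; elim: w => [|a w IH] //=.
exact: rel_mul.
Qed.

Variables (C : finType) (evC : seq C -> M) (E' : X -> seq C) (lamf : M -> nat).
Hypothesis Hev : forall u, evC (Ew E' u) = ev u.
Hypothesis Hsz : forall u, size (Ew E' u) = lamf (ev u).
Hypothesis Hlam : forall m z, lamf (act m z) = lamf z + lamf m.

Lemma variant m : regular (PadR (fun x y =>
  [/\ (exists u, Lg u /\ x = Ew E' u), (exists u, Lg u /\ y = Ew E' u) & act m (evC x) = evC y])).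
Proof.
have Hc : forall u v, Rel m u v -> size (Ew E' v) = size (Ew E' u) + lamf m.
  by move=> u v [_ _ H3]; rewrite !Hsz -H3 Hlam.
have H := regular_expand Hc (rel_all m).
apply: PadR_ext H => x y; split.
  move=> [u [v [[H1 H2 H3] -> ->]]]; split; [by exists u|by exists v|].
  by rewrite !Hev.
move=> [[u [Hu ->]] [v [Hv ->]]]; rewrite !Hev => H3.
by exists u, v; split.
Qed.

End Transfer.

Lemma padR_diag (A : Type) (x : seq A) : padR x x = map (fun c => (Some c, Some c)) x.
Proof. by elim: x => [|a x IH] //; rewrite padR_cc IH. Qed.

Lemma and3_iff (P1 P2 P3 Q1 Q2 Q3 : Prop) : (P1 <-> Q1) -> (P2 <-> Q2) -> (P3 <-> Q3) ->
  ([/\ P1, P2 & P3] <-> [/\ Q1, Q2 & Q3]).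
Proof. by move=> H1 H2 H3; split => -[/H1 ? /H2 ? /H3 ?]. Qed.

Lemma PadR_eqv (A : Type) (P P' : seq A -> seq A -> Prop) :
  (forall u v, P u v <-> P' u v) -> forall w, PadR P w <-> PadR P' w.
Proof. by move=> H w; split => -[u [v [Hp ->]]]; exists u, v; split => //; apply/H. Qed.

Section Main.
Variables (M : Type) (mul : M -> M -> M) (one : M).
Hypothesis Hl : monoid_laws mul one.
Variables (A0 : finType) (f0 : A0 -> M) (R0 : seq (seq A0 * seq A0)).
Hypothesis Hp : presents mul one f0 R0.
Hypothesis Hlen : forall p, p \in R0 -> size p.1 = size p.2.
Variables (A' : finType) (f' : A' -> M) (L' : seq A' -> Prop).
Hypothesis gen' : generates mul one f'.
Hypothesis onto' : forall m, exists w, L' w /\ eval_word mul one f' w = m.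
Variables (C : finType) (g : C -> M).
Hypothesis Hg : generates mul one g.

Local Notation ev f := (eval_word mul one f).
Local Notation lm := (lam Hp).

Definition EE (a : A') : seq C :=
  proj1_sig (constructive_indefinite_description _ (short_word Hl Hp Hlen Hg (f' a))).

Lemma EE_spec a : ev g (EE a) = f' a /\ size (EE a) = lm (f' a).
Proof. by rewrite /EE; case: constructive_indefinite_description. Qed.

Lemma Ew_cons (B : finType) (E : A' -> seq B) a u : Ew E (a :: u) = E a ++ Ew E u.
Proof. by []. Qed.

Lemma HevE u : ev g (Ew EE u) = ev f' u.
Proof.
elim: u => [|a u IH] //.
by rewrite Ew_cons (eval_cat Hl) IH (proj1 (EE_spec a)).
Qed.

Lemma HszE u : size (Ew EE u) = lm (ev f' u).
Proof.
elim: u => [|a u IH]; first by rewrite (lam_one Hp Hlen).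
by rewrite Ew_cons size_cat IH (proj2 (EE_spec a)) /= (lamM Hl Hp Hlen).
Qed.

Definition Er (a : A') : seq C := rev (EE a).

Lemma HevEr u : ev g (rev (Ew Er u)) = ev f' (rev u).
Proof. by rewrite /Er Ew_rev revK HevE. Qed.

Lemma HszEr u : size (Ew Er u) = lm (ev f' (rev u)).
Proof. by rewrite /Er Ew_rev size_rev HszE. Qed.

Definition KK (x : seq C) := exists u, L' u /\ x = Ew EE u.

Lemma KK_rev x : KK (rev x) <-> exists u, L' (rev u) /\ x = Ew Er u.
Proof.
split.
  move=> [u0 [Hu0 Hx]]; exists (rev u0); rewrite revK; split => //.
  by rewrite /Er Ew_rev revK -Hx revK.
move=> [u [Hu ->]]; exists (rev u); split => //.
by rewrite /Er Ew_rev revK.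
Qed.

Lemma KK_onto m : exists x, KK x /\ ev g x = m.
Proof.
have [w [Hw <-]] := onto' m.
by exists (Ew EE w); split; [exists w|rewrite HevE].
Qed.

Lemma right_rel_eq (X : Type) (f : X -> M) a u v :
  right_rel mul one f a u v <-> mul (ev f u) (ev f (letter_word a)) = ev f v.
Proof. by rewrite /right_rel (eval_cat Hl). Qed.

Lemma left_rel_eq (X : Type) (f : X -> M) a u v :
  left_rel mul one f a u v <-> mul (ev f (letter_word a)) (ev f u) = ev f v.
Proof. by rewrite /left_rel (eval_cat Hl). Qed.

Lemma ev_letter (X : Type) (f : X -> M) (a : X) : ev f (letter_word (Some a)) = f a.
Proof. by case: Hl => _ _ Hr; rewrite /= Hr. Qed.

Definition actR (m z : M) := mul z m.
Definition actL (m z : M) := mul m z.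

Lemma lawR : (forall x y z, actR (mul x y) z = actR y (actR x z)) \/
             (forall x y z, actR (mul x y) z = actR x (actR y z)).
Proof. by left => x y z; case: Hl => Ha _ _; rewrite /actR Ha. Qed.

Lemma lawL : (forall x y z, actL (mul x y) z = actL y (actL x z)) \/
             (forall x y z, actL (mul x y) z = actL x (actL y z)).
Proof. by right => x y z; case: Hl => Ha _ _; rewrite /actL Ha. Qed.

Lemma HlamR m z : lm (actR m z) = lm z + lm m.
Proof. exact: (lamM Hl Hp Hlen). Qed.
Lemma HlamL m z : lm (actL m z) = lm z + lm m.
Proof. by rewrite /actL (lamM Hl Hp Hlen) addnC. Qed.

Lemma onto_rev m : exists t, L' (rev t) /\ ev f' (rev t) = m.
Proof. by have [w [Hw <-]] := onto' m; exists (rev w); rewrite revK. Qed.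

Lemma part_rR : (forall a, regular (padded_lang (@padR A') L' (right_rel mul one f' a))) ->
  forall a, regular (padded_lang (@padR C) KK (right_rel mul one g a)).
Proof.
move=> H a.
have base1 : regular (PadR (Rel L' (ev f') actR one)).
  apply: PadR_ext (regular_ext (fun w => padded_PadR _ _ w) (H None)) => u v.
  by apply: and3_iff => //; rewrite right_rel_eq.
have base : forall b, regular (PadR (Rel L' (ev f') actR (f' b))).
  move=> b; apply: PadR_ext (regular_ext (fun w => padded_PadR _ _ w) (H (Some b))) => u v.
  by apply: and3_iff => //; rewrite right_rel_eq ev_letter.
have V := variant onto' gen' base1 base lawR HevE HszE HlamR (ev g (letter_word a)).
apply: regular_ext (V) => w; rewrite padded_PadR; apply: PadR_eqv => x y.
by apply: and3_iff => //; rewrite right_rel_eq.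
Qed.

Lemma part_lR : (forall a, regular (padded_lang (@padR A') L' (left_rel mul one f' a))) ->
  forall a, regular (padded_lang (@padR C) KK (left_rel mul one g a)).
Proof.
move=> H a.
have base1 : regular (PadR (Rel L' (ev f') actL one)).
  apply: PadR_ext (regular_ext (fun w => padded_PadR _ _ w) (H None)) => u v.
  by apply: and3_iff => //; rewrite left_rel_eq.
have base : forall b, regular (PadR (Rel L' (ev f') actL (f' b))).
  move=> b; apply: PadR_ext (regular_ext (fun w => padded_PadR _ _ w) (H (Some b))) => u v.
  by apply: and3_iff => //; rewrite left_rel_eq ev_letter.
have V := variant onto' gen' base1 base lawL HevE HszE HlamL (ev g (letter_word a)).
apply: regular_ext (V) => w; rewrite padded_PadR; apply: PadR_eqv => x y.
by apply: and3_iff => //; rewrite left_rel_eq.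
Qed.

Lemma part_rL : (forall a, regular (padded_lang (@padL A') L' (right_rel mul one f' a))) ->
  forall a, regular (padded_lang (@padL C) KK (right_rel mul one g a)).
Proof.
move=> H a.
have base1 : regular (PadR (Rel (fun u => L' (rev u)) (fun u => ev f' (rev u)) actR one)).
  apply: PadR_ext (proj1 (regular_padL _ _) (H None)) => u v.
  by apply: and3_iff => //; rewrite right_rel_eq.
have base : forall b, regular (PadR (Rel (fun u => L' (rev u)) (fun u => ev f' (rev u)) actR (f' b))).
  move=> b; apply: PadR_ext (proj1 (regular_padL _ _) (H (Some b))) => u v.
  by apply: and3_iff => //; rewrite right_rel_eq ev_letter.
have V := variant (evC := fun x => ev g (rev x)) onto_rev gen' base1 base lawR HevEr HszEr HlamR (ev g (letter_word a)).
apply/regular_padL; apply: PadR_ext V => x y; apply: and3_iff.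
- by rewrite KK_rev.
- by rewrite KK_rev.
- by rewrite right_rel_eq.
Qed.

Lemma part_lL : (forall a, regular (padded_lang (@padL A') L' (left_rel mul one f' a))) ->
  forall a, regular (padded_lang (@padL C) KK (left_rel mul one g a)).
Proof.
move=> H a.
have base1 : regular (PadR (Rel (fun u => L' (rev u)) (fun u => ev f' (rev u)) actL one)).
  apply: PadR_ext (proj1 (regular_padL _ _) (H None)) => u v.
  by apply: and3_iff => //; rewrite left_rel_eq.
have base : forall b, regular (PadR (Rel (fun u => L' (rev u)) (fun u => ev f' (rev u)) actL (f' b))).
  move=> b; apply: PadR_ext (proj1 (regular_padL _ _) (H (Some b))) => u v.
  by apply: and3_iff => //; rewrite left_rel_eq ev_letter.
have V := variant (evC := fun x => ev g (rev x)) onto_rev gen' base1 base lawL HevEr HszEr HlamL (ev g (letter_word a)).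
apply/regular_padL; apply: PadR_ext V => x y; apply: and3_iff.
- by rewrite KK_rev.
- by rewrite KK_rev.
- by rewrite left_rel_eq.
Qed.

Lemma KK_regular : regular (padded_lang (@padR C) KK (right_rel mul one g None)) -> regular KK.
Proof.
move=> H; apply: regular_ext (regular_preim (fun c => (Some c, Some c)) H) => x.
rewrite -padR_diag padded_PadR PadR_padR; split; first by case.
by move=> Hx; split => //; rewrite /right_rel cats0.
Qed.

End Main.

Unset Implicit Arguments.
Theorem proposition2p4 (M : Type) (mul : M -> M -> M) (one : M) :
  monoid_laws mul one ->
  homogeneous mul one ->
  (automatic mul one ->
     forall (C : finType) (g : C -> M), generates mul one g ->
       exists K : seq C -> Prop, automatic_structure mul one g K) /\
  (biautomatic mul one ->
     forall (C : finType) (g : C -> M), generates mul one g ->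
       exists K : seq C -> Prop, biautomatic_structure mul one g K).
Proof.
move=> Hl [A0 [f0 [R0 [Hp Hlen]]]]; split.
  move=> [A' [f' [L' [gen' [[_ onto'] Hr]]]]] C g Hg.
  have HrK := part_rR Hl Hp Hlen gen' onto' Hg Hr.
  exists (KK Hl Hp Hlen f' L' Hg); split => //; split.
    exact: KK_regular (HrK None).
  exact: KK_onto.
move=> [A' [f' [L' [gen' [[_ onto'] Hb]]]]] C g Hg.
have Hr1 : forall a, regular (padded_lang (@padR A') L' (right_rel mul one f' a)) by move=> a; case: (Hb a).
have Hr2 : forall a, regular (padded_lang (@padR A') L' (left_rel mul one f' a)) by move=> a; case: (Hb a).
have Hr3 : forall a, regular (padded_lang (@padL A') L' (right_rel mul one f' a)) by move=> a; case: (Hb a).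
have Hr4 : forall a, regular (padded_lang (@padL A') L' (left_rel mul one f' a)) by move=> a; case: (Hb a).
have HrK := part_rR Hl Hp Hlen gen' onto' Hg Hr1.
exists (KK Hl Hp Hlen f' L' Hg); split.
  split; [exact: KK_regular (HrK None)|exact: KK_onto].
move=> a; split.
- exact: HrK.
- by have := part_lR Hl Hp Hlen gen' onto' Hg Hr2 a.
- by have := part_rL Hl Hp Hlen gen' onto' Hg Hr3 a.
- by have := part_lL Hl Hp Hlen gen' onto' Hg Hr4 a.
Qed.
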